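(* Let $f,g:\mathbb{R}^n\to[0,+\infty)$ and $h_1,h_2:\mathbb{R}^n\to\mathbb{R}$, let $C\subseteq\mathbb{R}^n$ be closed and convex, $\Omega:=\{x:g(x)\neq0\}$, $C\cap\Omega\neq\emptyset$, and assume: $f$ is convex; $g$ is differentiable with locally Lipschitz gradient; $h_1$ is differentiable with locally Lipschitz gradient; $h_2$ is convex. Let $F(x)=f^2(x)/g(x)+h_1(x)-h_2(x)$ for $x\in\Omega\cap C$ and $F(x)=+\infty$ otherwise, let $x^0\in\mathrm{dom}F$, and assume that $\mathcal{X}_0:=\{x\in\mathrm{dom}F:F(x)\le F(x^0)\}$ is compact. Then $m_g:=\inf\{g(x):x\in\mathcal{X}_0\}>0$, and there exists $\Delta>0$ such that, with $\mathcal{X}_\Delta:=\{x\in\mathbb{R}^n:\mathrm{dist}(x,\mathcal{X}_0)\le\Delta\}$: (i) $g(x)\ge m_g/2$ for all $x\in\mathcal{X}_\Delta$; (ii) $f$, $g$, $f/g$, $\nabla g$ and $\nabla h_1$ are globally Lipschitz continuous on $\mathcal{X}_\Delta$; (iii) $M_{\nabla g}:=\sup\{\|\nabla g(x)\|_2:x\in\mathcal{X}_\Delta\}$, $M_g:=\sup\{g(x):x\in\mathcal{X}_\Delta\}$ and $M_{f/g}:=\sup\{f(x)/g(x):x\in\mathcal{X}_\Delta\}$ are finite.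
   Context: $\mathrm{dist}(x,S)=\inf\{\|x-y\|_2:y\in S\}$. *)

(* Defs.v *)
From HB Require Import structures.
From mathcomp Require Import all_boot all_order all_algebra.
From mathcomp Require Import all_classical all_reals all_analysis.
Set Implicit Arguments. Unset Strict Implicit. Unset Printing Implicit Defensive.
Import Order.TTheory GRing.Theory Num.Theory.
Import numFieldNormedType.Exports.
Local Open Scope classical_set_scope.
Local Open Scope ring_scope.

Section Defs.
Variable R : realType.

(* Euclidean norm on R^n (the library norm on 'rV is the max norm). *)
Definition norm2 {n : nat} (x : 'rV[R]_n) : R :=
  Num.sqrt (\sum_(i < n) x 0 i ^+ 2).

Definition dist2 {n : nat} (x : 'rV[R]_n) (S : set 'rV[R]_n) : R :=
  inf [set norm2 (x - y) | y in S].

Definition ball2 {n : nat} (x : 'rV[R]_n) (r : R) : set 'rV[R]_n :=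
  [set y | norm2 (y - x) <= r].

Definition grad {n : nat} (g : 'rV[R]_n -> R) (x : 'rV[R]_n) : 'rV[R]_n :=
  \row_(i < n) ('D_(delta_mx 0 i) g x).

Definition convex_set_on {n : nat} (C : set 'rV[R]_n) : Prop :=
  forall x y (t : R), C x -> C y -> 0 <= t <= 1 ->
    C (t *: x + (1 - t) *: y).

Definition convex_fun_on {n : nat} (f : 'rV[R]_n -> R) : Prop :=
  forall x y (t : R), 0 <= t <= 1 ->
    f (t *: x + (1 - t) *: y) <= t * f x + (1 - t) * f y.

Definition lipschitz_on_R {n : nat} (A : set 'rV[R]_n) (phi : 'rV[R]_n -> R) :=
  exists L : R, forall x y, A x -> A y -> `|phi x - phi y| <= L * norm2 (x - y).

Definition lipschitz_on_V {n m : nat} (A : set 'rV[R]_n)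
    (phi : 'rV[R]_n -> 'rV[R]_m) :=
  exists L : R, forall x y, A x -> A y ->
    norm2 (phi x - phi y) <= L * norm2 (x - y).

Definition locally_lipschitz_V {n m : nat} (phi : 'rV[R]_n -> 'rV[R]_m) :=
  forall x, exists2 r : R, 0 < r & lipschitz_on_V (ball2 x r) phi.

Definition Fobj {n : nat} (f g h1 h2 : 'rV[R]_n -> R) (C : set 'rV[R]_n)
    (x : 'rV[R]_n) : \bar R :=
  if (x \in C) && (g x != 0) then (f x ^+ 2 / g x + h1 x - h2 x)%:E
  else +oo%E.

Definition domF {n : nat} (F : 'rV[R]_n -> \bar R) : set 'rV[R]_n :=
  [set x | (F x < +oo)%E].

Definition sublevel {n : nat} (F : 'rV[R]_n -> \bar R) (x0 : 'rV[R]_n) :=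
  [set x | domF F x /\ (F x <= F x0)%E].

End Defs.

(* Main.v *)
Require Import Defs.
From HB Require Import structures.
From mathcomp Require Import all_boot all_order all_algebra.
From mathcomp Require Import all_classical all_reals all_analysis.
From mathcomp Require Import ring lra zify.
Set Implicit Arguments. Unset Strict Implicit. Unset Printing Implicit Defensive.
Import Order.TTheory GRing.Theory Num.Theory.
Import numFieldNormedType.Exports.
Local Open Scope classical_set_scope.
Local Open Scope ring_scope.
Lemma seq_min_pos (R : realType) (T : eqType) (s : seq T) (F : T -> R) :
  (forall x, x \in s -> 0 < F x) -> exists2 d, 0 < d & forall x, x \in s -> d <= F x.
Proof.
elim: s => [|a s IH] H; first by exists 1.
have [d d0 Hd] := IH (fun x xs => H x (ltac:(by rewrite in_cons xs orbT))).
exists (Num.min d (F a)); first by rewrite lt_min d0 H ?mem_head.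
move=> x; rewrite in_cons => /orP[/eqP->|xs]; first by rewrite ge_min lexx orbT.
by rewrite ge_min Hd.
Qed.
Lemma seq_max (R : realType) (T : eqType) (s : seq T) (F : T -> R) :
  exists2 M, 0 <= M & forall x, x \in s -> F x <= M.
Proof.
elim: s => [|a s [M M0 HM]]; first by exists 0.
exists (Num.max M (F a)); first by rewrite le_max M0.
move=> x; rewrite in_cons => /orP[/eqP->|xs]; first by rewrite le_max lexx orbT.
by rewrite le_max HM.
Qed.
Lemma cover_seq (R : realType) (U : normedModType R) (K : set U) (r : U -> R) :
  compact K -> (forall x, K x -> 0 < r x) ->
  exists s : seq U, (forall x, x \in s -> K x) /\
    (forall y, K y -> exists2 x, x \in s & `|x - y| < r x).
Proof.
rewrite compact_cover => cK rpos.
have [D' sD cov] : finite_subset_cover K (fun x => ball x (r x)) K.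
  apply: cK => [x _|y Ky]; first exact: ball_open.
  by exists y => //; apply: ballxx; apply: rpos.
exists (finmap.enum_fset D'); split.
  by move=> x /sD; rewrite inE.
move=> y /cov [x xD bxy]; exists x => //.
by move: bxy; rewrite -ball_normE.
Qed.
Lemma ntri (R : realType) (V : normedModType R) (a b c : V) :
  `|a - c| <= `|a - b| + `|b - c|.
Proof. have -> : a - c = (a - b) + (b - c) by rewrite addrA subrK.
exact: ler_normD. Qed.
Lemma ntri2 (R : realType) (V : normedModType R) (u v : V) :
  `|u| <= `|v| + `|u - v|.
Proof. by rewrite -{1}(subrK v u) addrC ler_normD. Qed.
Lemma lip_near (R : realType) (U V : normedModType R) (K : set U) (phi : U -> V) :
  compact K ->
  (forall x, K x -> exists2 r, 0 < r & exists L, forall y z,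
     `|x - y| < r -> `|x - z| < r -> `|phi y - phi z| <= L * `|y - z|) ->
  exists2 d, 0 < d & exists L M, forall y z,
    (exists2 a, K a & `|a - y| < d) -> (exists2 b, K b & `|b - z| < d) ->
    `|phi y - phi z| <= L * `|y - z| /\ `|phi y| <= M.
Proof.
move=> cK H.
have : forall x, exists p : R * R, K x -> 0 < p.1 /\ forall y z,
     `|x - y| < p.1 -> `|x - z| < p.1 -> `|phi y - phi z| <= p.2 * `|y - z|.
  move=> x; have [Kx|nKx] := pselect (K x); last by exists (0, 0).
  by have [r r0 [L HL]] := H x Kx; exists (r, L).
move=> /boolp.choice [p Hp].
pose r x := (p x).1; pose L x := (p x).2.
have [s [sK scov]] := @cover_seq R U K (fun x => r x / 2) cK
  (fun x Kx => divr_gt0 (proj1 (Hp x Kx)) (ltr0Sn _ 1)).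
have [de de0 Hde] := @seq_min_pos R U s (fun x => r x / 2)
  (fun x xs => divr_gt0 (proj1 (Hp x (sK x xs))) (ltr0Sn _ 1)).
have [Lm Lm0 HLm] := seq_max s L.
have [M M0 HM] := seq_max s (fun x => `|phi x| + `|L x| * r x).
have loc y : (exists2 a, K a & `|a - y| < de / 2) ->
    exists2 x, x \in s & `|x - y| < r x / 2 + de / 2.
  move=> [a Ka ay]; have [x xs xa] := scov a Ka; exists x => //.
  by rewrite (le_lt_trans (ntri _ a _)) ?ltrD.
have bnd y : (exists2 a, K a & `|a - y| < de / 2) -> `|phi y| <= M.
  move=> /loc [x xs xy]; have [rx0 Hx] := Hp x (sK x xs).
  have hxy : `|x - y| < r x.
    have := Hde x xs; rewrite -/(r x); lra.
  have := Hx y x hxy; rewrite subrr normr0 -/(r x) => /(_ rx0) h.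
  rewrite (le_trans _ (HM x xs)) //.
  rewrite (le_trans (ntri2 _ (phi x))) //.
  rewrite lerD2l (le_trans h) // -/(L x).
  rewrite (le_trans (ler_wpM2r (normr_ge0 _) (ler_norm _))) // ler_wpM2l // distrC ltW //.
exists (de / 2); first by rewrite divr_gt0.
exists (Num.max Lm (4 * M / de)), M => y z hy hz; split; last exact: bnd.
have [yz|yz] := ltP `|y - z| (de / 2).
  have [x xs xy] := loc y hy; have [rx0 Hx] := Hp x (sK x xs).
  have hde := Hde x xs.
  have hxy : `|x - y| < r x by rewrite -/(r x) in hde; lra.
  have hxz : `|x - z| < r x.
    rewrite (le_lt_trans (ntri _ y _)) //.
    by rewrite -/(r x) in hde; lra.
  rewrite (le_trans (Hx y z hxy hxz)) // ler_wpM2r //.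
  by rewrite le_max (HLm x xs).
have hM : `|phi y - phi z| <= 2 * M.
  rewrite (le_trans (ler_normB _ _)) //.
  have := bnd y hy; have := bnd z hz; lra.
rewrite (le_trans hM) // (le_trans _ (ler_wpM2r (normr_ge0 _) (_ : 4 * M / de <= Num.max Lm (4 * M / de)))) //; last by rewrite le_max lexx orbT.
rewrite mulrAC ler_pdivlMr //.
have : de <= 2 * `|y - z| by lra.
move=> h; nra.
Qed.

Section N.
Variables (R : realType) (n : nat).
Lemma comp_le (v : 'rV[R]_n) i : `|v 0 i| <= `|v|.
Proof.
rewrite [leRHS]/Num.Def.normr /= mx_normrE.
by apply/bigmax_geP; right; exists (0, i).
Qed.
Lemma norm_le (v : 'rV[R]_n) c : 0 <= c -> (forall i, `|v 0 i| <= c) -> `|v| <= c.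
Proof.
move=> c0 H; rewrite [leLHS]/Num.Def.normr /= mx_normrE.
apply: bigmax_le => // -[i j] _ /=; by rewrite ord1.
Qed.
Lemma norm_le_norm2 (v : 'rV[R]_n) : `|v| <= norm2 v.
Proof.
apply: norm_le; first exact: sqrtr_ge0.
move=> i; rewrite /norm2 -sqrtr_sqr ler_sqrt ?sqr_ge0 //.
rewrite (bigD1 i) //= lerDl sumr_ge0 // => j _; try exact: sqr_ge0.
by apply: sumr_ge0 => j _; exact: sqr_ge0.
Qed.
Lemma norm2_le (v : 'rV[R]_n) : norm2 v <= n.+1%:R * `|v|.
Proof.
rewrite /norm2 -[X in _ <= X]ger0_norm ?mulr_ge0 // -sqrtr_sqr ler_sqrt ?sqr_ge0 //.
rewrite (le_trans (_ : _ <= \sum_(i < n) `|v|^+2)).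
  by []. apply: ler_sum => i _; rewrite -real_normK ?num_real // lerXn2r ?nnegrE //.
  exact: comp_le.
rewrite sumr_const card_ord -mulr_natr.
have h1 : (n%:R : R) <= n.+1%:R ^+ 2 by rewrite -natrX ler_nat; lia.
have h2 : 0 <= `|v| ^+ 2 := sqr_ge0 _.
nra.
Qed.
Lemma comb_line (l a : R) (y u : 'rV[R]_n) :
  l *: (y + a *: u) + (1 - l) *: y = y + (l * a) *: u.
Proof. by rewrite scalerDr scalerA scalerBl scale1r addrC addrA subrK. Qed.

Lemma line_derive (g : 'rV[R]_n -> R) (z v : 'rV[R]_n) (t : R) :
  derivable g (z + t *: v) v ->
  is_derive t 1 (fun s => g (z + s *: v)) ('D_v g (z + t *: v)).
Proof.
have E : (fun h : R => h^-1 *: (((fun s => g (z + s *: v)) \o shift t) (h *: 1)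
            - g (z + t *: v))) =
         (fun h : R => h^-1 *: ((g \o shift (z + t *: v)) (h *: v) - g (z + t *: v))).
  apply: funext => h /=; congr (_ *: (g _ - _)).
  by rewrite scaler1 scalerDl addrCA addrC.
move=> dg; split; first by rewrite /derivable E.
by rewrite /derive E.
Qed.

Lemma deriv_grad (g : 'rV[R]_n -> R) (p v : 'rV[R]_n) : differentiable g p ->
  'D_v g p = \sum_i v 0 i * grad g p 0 i.
Proof.
move=> dg; rewrite deriveE // {1}(row_sum_delta v) linear_sum.
apply: eq_bigr => i _; rewrite linearZ /= -deriveE // /grad mxE //.
Qed.
End N.

Section F.
Variables (R : realType) (n : nat).
Variable f : 'rV[R]_n -> R.
Hypothesis fc : convex_fun_on f.

Lemma conv1d (x : 'rV[R]_n) (e : 'rV[R]_n) (r s : R) : 0 < r -> `|s| <= r ->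
  f (x + s *: e) <= Num.max (f (x + r *: e)) (f (x + (- r) *: e)).
Proof.
move=> r0 sr; set l := (s + r) / (2 * r).
have hl : 0 <= l <= 1.
  move: sr; rewrite ler_norml => /andP[h1 h2].
  by apply/andP; split; [rewrite divr_ge0 //; lra | rewrite ler_pdivrMr; lra].
have -> : x + s *: e = l *: (x + r *: e) + (1 - l) *: (x + (- r) *: e).
  rewrite -[l *: (x + r *: e)](_ : l *: ((x + (- r) *: e) + (2 * r) *: e) = _).
    rewrite comb_line -addrA -scalerDl; congr (_ + _ *: _).
    rewrite /l; field; lra.
  by congr (_ *: _); rewrite -addrA -scalerDl; congr (_ + _ *: _); lra.
apply: (le_trans (fc _ _ hl)).
set m := Num.max _ _.
have h1 : f (x + r *: e) <= m by rewrite le_max lexx.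
have h2 : f (x + (- r) *: e) <= m by rewrite le_max lexx orbT.
move: hl => /andP[hl1 hl2]; nra.
Qed.

Lemma conv_ub (x : 'rV[R]_n) k : forall r, 0 < r -> exists U, forall y,
  `|y - x| <= r -> (forall i : 'I_n, (k <= i)%N -> y 0 i = x 0 i) -> f y <= U.
Proof.
elim: k => [|k IH] r r0.
  exists (f x) => y _ H.
  by have -> : y = x by apply/rowP => i; rewrite H.
have [kn|nk] := ltnP k n; last first.
  have [U HU] := IH r r0; exists U => y yr H; apply: HU => // i ki.
  by move: (ltn_ord i); lia.
pose ik := Ordinal kn; pose e : 'rV[R]_n := delta_mx 0 ik.
have [U HU] := IH (2 * r) (ltac:(lra)).
exists ((U + Num.max (f (x + (2 * r) *: e)) (f (x + (- (2 * r)) *: e))) / 2).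
move=> y yr H.
pose t := y 0 ik - x 0 ik.
pose z := y - t *: e.
have ht : `|t| <= r.
  by have := comp_le (y - x) ik; rewrite !mxE /t => h; apply: le_trans h yr.
have zx : `|z - x| <= r.
  apply: norm_le; first lra.
  move=> i; have := comp_le (y - x) i; rewrite !mxE /t.
  have [->|ne] := eqVneq i ik.
    rewrite eqxx /= mulr1 => _.
    rewrite (_ : _ + _ = 0) ?normr0; [lra | ring].
  by rewrite /= mulr0 subr0 => h; apply: le_trans h yr.
have ya : y = (1/2) *: (z + (z - x)) + (1 - 1/2) *: (x + (2 * t) *: e).
  by apply/rowP => i; rewrite !mxE /t; set d := (_ && _)%:R; field.
rewrite ya.
have h12 : 0 <= (1/2 : R) <= 1 by apply/andP; split; lra.
apply: (le_trans (fc _ _ h12)).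
have h1 : f (z + (z - x)) <= U.
  apply: HU.
    have -> : z + (z - x) - x = 2%:R *: (z - x).
      by apply/rowP => i; rewrite !mxE; ring.
    rewrite normrZ ger0_norm //; lra.
  move=> i ki; rewrite !mxE /t.
  have [->|ne] := eqVneq i ik; first by rewrite eqxx mulr1; ring.
  rewrite /= mulr0 subr0 H //.
    by ring.
  have : (nat_of_ord i != k) by apply: contra ne => /eqP h; apply/eqP/val_inj.
  by move: ki; lia.
have h2 := conv1d x e (ltac:(lra) : 0 < 2 * r)
  (ltac:(rewrite normrM (ger0_norm (_ : 0 <= 2 :> R)) //; lra) : `|2 * t| <= 2 * r).
lra.
Qed.

Lemma conv_bound (x : 'rV[R]_n) r : 0 < r ->
  exists2 M, 0 <= M & forall y, `|y - x| <= r -> `|f y| <= M.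
Proof.
move=> r0; have [U HU] := conv_ub x n r0.
have HU' y : `|y - x| <= r -> f y <= U.
  by move=> yr; apply: HU => // i; move: (ltn_ord i); lia.
exists (`|U| + `|2 * f x - U|); first by rewrite addr_ge0.
move=> y yr.
have h12 : 0 <= (1/2 : R) <= 1 by apply/andP; split; lra.
have hx := fc y (x + (x - y)) h12.
have e1 : (1/2 : R) *: y + (1 - 1/2) *: (x + (x - y)) = x.
  by apply/rowP => i; rewrite !mxE; field.
rewrite e1 in hx.
have h2 : f (x + (x - y)) <= U.
  by apply: HU'; rewrite addrC addKr distrC.
have := ler_norm U; have := ler_norm (2 * f x - U).
have := ler_normr (2 * f x - U) (2 * f x - U).
rewrite ler_normr lexx => _ hh1 hh2.
rewrite ler_norml; apply/andP; split.
  have := normr_ge0 U; have := normr_ge0 (2 * f x - U).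
  have := ler_normr (2 * f x - U) (2 * f x - U).
  move=> _ a b. have := ler_norm (U - 2 * f x).
  rewrite distrC => c. lra.
have := HU' y yr; have := normr_ge0 (2 * f x - U); lra.
Qed.

Lemma one_side (x : 'rV[R]_n) M y z : (forall w, `|w - x| <= 2 -> `|f w| <= M) ->
  `|x - y| < 1 -> `|x - z| < 1 -> f z - f y <= 2 * M * `|z - y|.
Proof.
move=> HM xy xz.
have M0 : 0 <= M by apply: le_trans (normr_ge0 (f x)) (HM x _); rewrite subrr normr0; lra.
have [->|ne] := eqVneq z y; first by rewrite !subrr normr0 mulr0.
set d := `|z - y|.
have d0 : 0 < d by rewrite normr_gt0 subr_eq0.
pose w := y + (1 + d^-1) *: (z - y).
have wx : `|w - x| <= 2.
  have -> : w - x = (z - x) + d^-1 *: (z - y).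
    by rewrite /w scalerDl scale1r addrA [y + _]addrC subrK addrAC.
  rewrite (le_trans (ler_normD _ _)) // normrZ ger0_norm ?invr_ge0 ?ltW //.
  rewrite mulVf ?gt_eqF // distrC; lra.
pose l := d / (d + 1).
have hl : 0 <= l <= 1.
  by apply/andP; split; [rewrite divr_ge0 //; lra | rewrite ler_pdivrMr; lra].
have ez : l *: w + (1 - l) *: y = z.
  rewrite /w comb_line (_ : l * (1 + d^-1) = 1) ?scale1r ?[y + _]addrC ?subrK //.
  rewrite /l; field; lra.
have hc := fc w y hl; rewrite ez in hc.
have hw := HM w wx.
have hy : `|f y| <= M by apply: HM; rewrite distrC; lra.
have ld : l <= d.
  rewrite /l ler_pdivrMr; last lra.
  nra.
have := ler_norm (f w); have := ler_normr (f y) (f y); rewrite lexx /= => _.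
have := ler_norml (f y) M; rewrite hy => /esym /andP [hy1 _].
move=> hw1.
have : f z - f y <= l * (f w - f y) by lra.
have : l * (f w - f y) <= l * (2 * M).
  by apply: ler_wpM2l; [case/andP: hl | lra].
move: hl => /andP [hl0 _].
nra.
Qed.

Lemma convex_loclip (x : 'rV[R]_n) : exists2 r, 0 < r & exists L, forall y z,
  `|x - y| < r -> `|x - z| < r -> `|f y - f z| <= L * `|y - z|.
Proof.
have [M M0 HM] := conv_bound x (ltac:(lra) : (0 : R) < 2).
exists 1; first lra.
exists (2 * M) => y z xy xz.
rewrite ler_norml; apply/andP; split.
  have := one_side HM xy xz; rewrite distrC; lra.
exact: one_side HM xz xy.
Qed.
End F.

Section D.
Variables (R : realType) (n : nat).
Lemma diff_loclip (g : 'rV[R]_n -> R) : (forall x, differentiable g x) ->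
  locally_lipschitz_V (grad g) -> forall x : 'rV[R]_n, exists2 r, 0 < r &
  exists L, forall y z, `|x - y| < r -> `|x - z| < r -> `|g y - g z| <= L * `|y - z|.
Proof.
move=> dg gl x; have [r0 r00 [Lg HL]] := gl x.
have n0 : (0 : R) < n.+1%:R by [].
pose r := r0 / n.+1%:R.
have r0r : 0 < r by rewrite divr_gt0.
pose B := `|grad g x| + `|Lg| * r0.
have hB p : `|x - p| < r -> `|grad g p| <= B.
  move=> xp.
  have h2 : norm2 (p - x) <= r0.
    rewrite (le_trans (norm2_le _)) // distrC -ler_pdivlMl // mulrC.
    exact: ltW.
  have hx0 : ball2 x r0 x.
    rewrite /ball2 /= subrr /norm2 big1 ?sqrtr0 ?ltW // => i _.
    by rewrite mxE expr0n.
  have h3 := HL p x h2 hx0.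
  rewrite (le_trans (ntri2 _ (grad g x))) // lerD2l.
  rewrite (le_trans (norm_le_norm2 _)) // (le_trans h3) //.
  rewrite (le_trans (ler_norm _)) // normrM ler_wpM2l //.
  by rewrite ger0_norm ?sqrtr_ge0.
exists r => //; exists (n%:R * B) => y z xy xz.
pose v := y - z.
pose phi := fun s : R => g (z + s *: v).
have dphi (t : R) : is_derive t 1 phi ('D_v g (z + t *: v)).
  by apply: line_derive; apply: diff_derivable.
have cphi : {within `[0, 1], continuous phi}.
  apply: continuous_subspaceT => t.
  apply: differentiable_continuous; apply/derivable1_diffP.
  exact: (@ex_derive _ _ _ _ _ _ _ (dphi t)).
have [c c01 hc] := MVT_segment (@ler01 R) (fun t _ => dphi t) cphi.
have -> : g y - g z = phi 1 - phi 0.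
  by rewrite /phi scale0r addr0 scale1r /v [z + _]addrC subrK.
rewrite hc subr0 mulr1 deriv_grad //.
have hp : `|x - (z + c *: v)| < r.
  have -> : x - (z + c *: v) = (1 - c) *: (x - z) + c *: (x - y).
    by apply/rowP => i; rewrite !mxE /v ?mxE; ring.
  move: c01; rewrite in_itv /= => /andP[c0 c1].
  rewrite (le_lt_trans (ler_normD _ _)) // !normrZ !ger0_norm ?subr_ge0 //.
  have h2 : c * `|x - y| <= c * r by rewrite ler_wpM2l // ltW.
  have [lt1|ge1] := ltP c 1.
    have : (1 - c) * `|x - z| < (1 - c) * r by rewrite ltr_pM2l // subr_gt0.
    lra.
  have -> : c = 1 by apply/eqP; rewrite eq_le c1 ge1.
  by rewrite subrr mul0r add0r mul1r.
rewrite (le_trans (ler_norm_sum _ _ _)) //.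
apply: (@le_trans _ _ (\sum_(i < n) `|v| * B)).
  apply: ler_sum => i _; rewrite normrM ler_pM ?normr_ge0 //; first exact: comp_le.
  by rewrite (le_trans (comp_le _ i)) // hB.
by rewrite sumr_const card_ord -[_ *+ n]mulr_natr /v; nra.
Qed.
End D.

Section M.
Variables (R : realType) (n : nat).

Lemma loclipV m (phi : 'rV[R]_n -> 'rV[R]_m) : locally_lipschitz_V phi ->
  forall x, exists2 r, 0 < r & exists L, forall y z,
  `|x - y| < r -> `|x - z| < r -> `|phi y - phi z| <= L * `|y - z|.
Proof.
move=> H x; have [r0 r00 [L HL]] := H x.
have n0 : (0 : R) < n.+1%:R by [].
exists (r0 / n.+1%:R); first by rewrite divr_gt0.
exists (`|L| * n.+1%:R) => y z xy xz.
have hb p : `|x - p| < r0 / n.+1%:R -> ball2 x r0 p.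
  move=> xp; rewrite /ball2 /= (le_trans (norm2_le _)) // distrC.
  by rewrite -ler_pdivlMl // mulrC ltW.
rewrite (le_trans (norm_le_norm2 _)) // (le_trans (HL y z (hb y xy) (hb z xz))) //.
rewrite (le_trans (ler_wpM2r (sqrtr_ge0 _) (ler_norm L))) // -mulrA ler_wpM2l //.
exact: norm2_le.
Qed.

Lemma lipR_of (A : set 'rV[R]_n) phi L :
  (forall x y, A x -> A y -> `|phi x - phi y| <= L * `|x - y|) -> lipschitz_on_R A phi.
Proof.
move=> H; exists `|L| => x y Ax Ay.
rewrite (le_trans (H x y Ax Ay)) // (le_trans (ler_wpM2r (normr_ge0 _) (ler_norm L))) //.
by rewrite ler_wpM2l // norm_le_norm2.
Qed.

Lemma lipV_of m (A : set 'rV[R]_n) (phi : 'rV[R]_n -> 'rV[R]_m) L :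
  (forall x y, A x -> A y -> `|phi x - phi y| <= L * `|x - y|) -> lipschitz_on_V A phi.
Proof.
move=> H; exists (m.+1%:R * `|L|) => x y Ax Ay.
rewrite (le_trans (norm2_le _)) // -mulrA ler_wpM2l //.
rewrite (le_trans (H x y Ax Ay)) // (le_trans (ler_wpM2r (normr_ge0 _) (ler_norm L))) //.
by rewrite ler_wpM2l // norm_le_norm2.
Qed.
End M.

Unset Implicit Arguments.
Theorem lemma4p1 (R : realType) (n : nat)
  (f g h1 h2 : 'rV[R]_n -> R) (C : set 'rV[R]_n) (x0 : 'rV[R]_n)
  (f_ge0 : forall x, 0 <= f x) (g_ge0 : forall x, 0 <= g x)
  (C_closed : closed C) (C_convex : convex_set_on C)
  (COmega : exists x, C x /\ g x != 0)
  (f_convex : convex_fun_on f)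
  (g_diff : forall x, differentiable g x)
  (g_grad_loclip : locally_lipschitz_V (grad g))
  (h1_diff : forall x, differentiable h1 x)
  (h1_grad_loclip : locally_lipschitz_V (grad h1))
  (h2_convex : convex_fun_on h2)
  (x0_dom : domF (Fobj f g h1 h2 C) x0)
  (X0_compact : compact (sublevel (Fobj f g h1 h2 C) x0)) :
  let X0 := sublevel (Fobj f g h1 h2 C) x0 in
  let mg := inf [set g x | x in X0] in
  0 < mg /\
  exists2 Delta : R, 0 < Delta &
    let XD := [set x | dist2 x X0 <= Delta] in
    [/\ (forall x, XD x -> mg / 2 <= g x),
        [/\ lipschitz_on_R XD f, lipschitz_on_R XD g,
            lipschitz_on_R XD (fun x => f x / g x),
            lipschitz_on_V XD (grad g) & lipschitz_on_V XD (grad h1)] &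
        [/\ has_ubound [set norm2 (grad g x) | x in XD],
            has_ubound [set g x | x in XD] &
            has_ubound [set f x / g x | x in XD]]].
Proof.
move=> X0 mg.
have X0g x : X0 x -> 0 < g x.
  case=> hd _; move: hd; rewrite /domF /Fobj /=.
  case: ifP => [/andP[_ gx] _|]; last by rewrite ltxx.
  by rewrite lt_def gx g_ge0.
have X0x0 : X0 x0 by split.
have [df df0 [Lf [Mf Hf]]] := lip_near X0_compact (fun x _ => convex_loclip f_convex x).
have [dg dg0 [Lg [Mg Hg]]] := lip_near X0_compact (fun x _ => diff_loclip g_diff g_grad_loclip x).
have [dgg dgg0 [Lgg [Mgg Hgg]]] := lip_near X0_compact (fun x _ => loclipV g_grad_loclip x).
have [dh dh0 [Lh [Mh Hh]]] := lip_near X0_compact (fun x _ => loclipV h1_grad_loclip x).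
have gcont : continuous g := fun x => differentiable_continuous (g_diff x).
have [c cX0 cmin] := compact_EVT_min (ex_intro _ x0 X0x0) X0_compact
  (continuous_subspaceT gcont).
have S0 : [set g x | x in X0] !=set0 by exists (g x0), x0.
have mgc : g c <= mg.
  apply: lb_le_inf => // _ [t tX <-]; apply: cmin; exact: mem_set.
have mg0 : 0 < mg := lt_le_trans (X0g c (set_mem cX0)) mgc.
have mgle a : X0 a -> mg <= g a.
  move=> aX; apply: ge_inf; last by exists a.
  by exists 0 => _ [t tX <-]; apply: g_ge0.
split => //.
pose D := Num.min (Num.min df dg) (Num.min (Num.min dgg dh) (mg / (4 * (`|Lg| + 1)))).
have D0 : 0 < D.
  rewrite /D !lt_min df0 dg0 dgg0 dh0 /= divr_gt0 // mulr_gt0 //.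
have Ddf : D <= df by rewrite /D !ge_min lexx.
have Ddg : D <= dg by rewrite /D !ge_min lexx !orbT.
have Ddgg : D <= dgg by rewrite /D !ge_min lexx !orbT.
have Ddh : D <= dh by rewrite /D !ge_min lexx !orbT.
have Dmg : D <= mg / (4 * (`|Lg| + 1)) by rewrite /D !ge_min lexx !orbT.
have nw d d' x : d <= d' -> (exists2 a, X0 a & `|a - x| < d) -> (exists2 a, X0 a & `|a - x| < d').
  by move=> dd [a aX ax]; exists a => //; apply: lt_le_trans dd.
have self d a : 0 < d -> X0 a -> exists2 b, X0 b & `|b - a| < d.
  by move=> d0 aX; exists a => //; rewrite subrr normr0.
exists (D / 2); first by rewrite divr_gt0.
move=> XD.
have near x : XD x -> exists2 a, X0 a & `|a - x| < D.
  move=> hx.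
  have S1 : [set norm2 (x - y) | y in X0] !=set0 by exists (norm2 (x - x0)), x0.
  have hD : D / 2 < D by lra.
  have [_ [a aX0 <-] lt] := inf_lt S1 (le_lt_trans hx hD).
  exists a => //; rewrite distrC; exact: le_lt_trans (norm_le_norm2 _) lt.
have nf x : XD x -> exists2 a, X0 a & `|a - x| < df := fun h => nw _ _ _ Ddf (near x h).
have ng x : XD x -> exists2 a, X0 a & `|a - x| < dg := fun h => nw _ _ _ Ddg (near x h).
have ngg x : XD x -> exists2 a, X0 a & `|a - x| < dgg := fun h => nw _ _ _ Ddgg (near x h).
have nh x : XD x -> exists2 a, X0 a & `|a - x| < dh := fun h => nw _ _ _ Ddh (near x h).
have gi x : XD x -> mg / 2 <= g x.
  move=> hx; have [a aX ax] := near x hx.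
  have [h _] := Hg x a (nw _ _ _ Ddg (ex_intro2 _ _ a aX ax)) (self _ _ dg0 aX).
  have k1 : Lg * `|x - a| <= `|Lg| * D.
    rewrite (le_trans (ler_wpM2r (normr_ge0 _) (ler_norm Lg))) // ler_wpM2l //.
    by rewrite distrC ltW.
  have k2 : `|Lg| * D <= mg / 4.
    have : 0 < 4 * (`|Lg| + 1) by have := normr_ge0 Lg; lra.
    move=> p; move: Dmg; rewrite ler_pdivlMr // => hh.
    have := normr_ge0 Lg; nra.
  have := mgle a aX; have := ler_norm (g a - g x); rewrite distrC.
  lra.
split => //.
  split.
  - by apply: (@lipR_of _ _ _ _ Lf) => x y hx hy; case: (Hf x y (nf x hx) (nf y hy)).
  - by apply: (@lipR_of _ _ _ _ Lg) => x y hx hy; case: (Hg x y (ng x hx) (ng y hy)).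
  - pose m := mg / 2.
    have m0 : 0 < m by rewrite divr_gt0.
    apply: (@lipR_of _ _ _ _ ((`|Lf| * Mg + Mf * `|Lg|) / (m * m))) => x y hx hy.
    have [hf1 hf2] := Hf x y (nf x hx) (nf y hy).
    have [hf1' hf2'] := Hf y x (nf y hy) (nf x hx).
    have [hg1 hg2] := Hg y x (ng y hy) (ng x hx).
    have [hg1' hg2'] := Hg x y (ng x hx) (ng y hy).
    have gx := gi x hx; have gy := gi y hy.
    have gx0 : 0 < g x by lra.
    have gy0 : 0 < g y by lra.
    have e : f x / g x - f y / g y =
        ((f x - f y) * g y + f y * (g y - g x)) / (g x * g y).
      by field; apply/andP; split; apply: lt0r_neq0.
    rewrite e normrM normfV (ger0_norm (ltW (mulr_gt0 gx0 gy0))).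
    rewrite ler_pdivrMr ?mulr_gt0 //.
    set d := `|x - y|.
    have s1 : `|(f x - f y) * g y + f y * (g y - g x)| <=
        `|f x - f y| * `|g y| + `|f y| * `|g y - g x|.
      by rewrite -!normrM ler_normD.
    have s2 : `|f x - f y| * `|g y| <= (`|Lf| * d) * Mg.
      apply: ler_pM => //.
      by rewrite (le_trans hf1) // ler_wpM2r // ler_norm.
    have s3 : `|f y| * `|g y - g x| <= Mf * (`|Lg| * d).
      apply: ler_pM => //.
      by rewrite (le_trans hg1) // distrC ler_wpM2r // ?normr_ge0 // ler_norm.
    have s4 : m * m <= g x * g y by rewrite /m; apply: ler_pM; lra.
    have K0 : 0 <= `|Lf| * Mg + Mf * `|Lg|.
      have : 0 <= Mf by apply: le_trans (normr_ge0 _) hf2.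
      have : 0 <= Mg by apply: le_trans (normr_ge0 _) hg2.
      move=> a b; apply: addr_ge0; apply: mulr_ge0 => //.
    have s5 : (`|Lf| * Mg + Mf * `|Lg|) <= (`|Lf| * Mg + Mf * `|Lg|) / (m * m) * (g x * g y).
      rewrite mulrAC ler_pdivlMr ?mulr_gt0 //.
      by apply: ler_wpM2l.
    have d0 : 0 <= d := normr_ge0 _.
    have s6 := ler_wpM2r d0 s5.
    nra.
  - by apply: (@lipV_of _ _ _ _ _ Lgg) => x y hx hy; case: (Hgg x y (ngg x hx) (ngg y hy)).
  - by apply: (@lipV_of _ _ _ _ _ Lh) => x y hx hy; case: (Hh x y (nh x hx) (nh y hy)).
split.
- exists (n.+1%:R * Mgg) => _ [x hx <-].
  rewrite (le_trans (norm2_le _)) // ler_wpM2l //.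
  by case: (Hgg x x (ngg x hx) (ngg x hx)).
- exists Mg => _ [x hx <-].
  by case: (Hg x x (ng x hx) (ng x hx)) => _ h; apply: le_trans (ler_norm _) h.
- exists (Mf / (mg / 2)) => _ [x hx <-].
  have gx := gi x hx.
  have m0 : 0 < mg / 2 by rewrite divr_gt0.
  have [_ h] := Hf x x (nf x hx) (nf x hx).
  rewrite (@le_trans _ _ (f x / (mg / 2))) //.
    by rewrite ler_wpM2l // lef_pV2 ?posrE // (lt_le_trans m0).
  by apply: ler_wpM2r; [rewrite invr_ge0 ltW | exact: le_trans (ler_norm _) h].
Qed.
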